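(* Let $W_0$, $W_1$, $W_2$ be the abstract Coxeter groups with the following Coxeter graphs on four nodes: - $W_0=[\infty,3,3]$: linear graph $s_1 - s_2 - s_3 - s_4$ with $m_{12}=\infty$, $m_{23}=m_{34}=3$, all other pairs commuting; - $W_1=[3,\infty,3]$: linear graph $s_1 - s_2 - s_3 - s_4$ with $m_{12}=3$, $m_{23}=\infty$, $m_{34}=3$, all other pairs commuting; - $W_2=[\infty,3^{1,1}]$: a central node $s_2$ joined to $s_1$ by an edge with $m_{12}=\infty$ and to $s_3,s_4$ by edges with $m_{23}=m_{24}=3$, all other pairs commuting. Then their growth rates satisfy $\tau_{W_0}<\tau_{W_1}$ and $\tau_{W_0}<\tau_{W_2}$.
   Context: For a Coxeter system $(W,S)$ (group $W$ generated by a finite set $S$ with relations $s^2=1$ and $(ss')^{m_{ss'}}=1$, $m_{ss'}\in\{2,3,\dots,\infty\}$), the growth series is $f_S(t)=1+\sum_{k\ge1}a_kt^k$ with $a_k$ the number of elements of $S$-word length $k$, and the growth rate $\tau_W$ is the inverse of the radius of convergence of $f_S(t)$ (equivalently $\limsup_k a_k^{1/k}$). *)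

(* Defs.v *)
From mathcomp Require Import all_boot all_order all_algebra.
From mathcomp Require Import all_classical all_reals all_analysis.
Set Implicit Arguments. Unset Strict Implicit. Unset Printing Implicit Defensive.
Import Order.TTheory GRing.Theory Num.Theory.

(* A Coxeter matrix on a finite generating set S = 'I_n, given as
   m : 'I_n -> 'I_n -> nat, where the value 0 encodes m_{ss'} = infinity
   (no relation).  The Coxeter group is
   the group <S | s^2 = 1, (s s')^(m_{ss'}) = 1>; since every generator is
   an involution, it is the quotient of the free monoid on S by the
   congruence generated by the relators r ~ [::]. *)

Definition coxeter_relator (n : nat) (m : 'I_n -> 'I_n -> nat)
  (r : seq 'I_n) : Prop :=
  (exists s, r = [:: s; s]) \/
  (exists s s', s != s' /\ (0 < m s s')%N /\
     r = flatten (nseq (m s s') [:: s; s'])).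

Inductive cox_eq (n : nat) (m : 'I_n -> 'I_n -> nat) :
  seq 'I_n -> seq 'I_n -> Prop :=
| cox_eq_rel u r v : coxeter_relator m r -> cox_eq m (u ++ r ++ v) (u ++ v)
| cox_eq_refl u : cox_eq m u u
| cox_eq_sym u v : cox_eq m u v -> cox_eq m v u
| cox_eq_trans u v w : cox_eq m u v -> cox_eq m v w -> cox_eq m u w.

Definition geodesic (n : nat) (m : 'I_n -> 'I_n -> nat) (w : seq 'I_n) : Prop :=
  forall v, cox_eq m v w -> (size w <= size v)%N.

(* a_k = number of elements of W of word length k: count one representative
   (the first in the enumeration order) among the geodesic words of length k
   in each class. *)
Definition growth_coeff (n : nat) (m : 'I_n -> 'I_n -> nat) (k : nat) : nat :=
  #|[set w : k.-tuple 'I_n |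
      `[< geodesic m w >] &&
      [forall v : k.-tuple 'I_n,
         (enum_rank v < enum_rank w)%N ==> ~~ `[< cox_eq m v w >]]]|.

(* growth rate tau_W = limsup_k a_k^(1/k) (= inverse radius of convergence
   of the growth series), as an extended real *)
Definition growth_rate (R : realType) (n : nat) (m : 'I_n -> 'I_n -> nat)
  : \bar R :=
  limn_esup (fun k => (((growth_coeff m k)%:R : R) `^ (k%:R^-1))%:E).

(* Coxeter matrices; generators s1..s4 are indices 0..3; 0 means infinity. *)
Definition mk4 (a b c d e f : nat) (i j : 'I_4) : nat :=
  let p := (minn i j, maxn i j) in
  if i == j then 1%N else
  match p with
  | (0, 1) => a | (0, 2) => b | (0, 3) => c
  | (1, 2) => d | (1, 3) => e | (2, 3) => f
  | _ => 1%N
  end%N.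

(* W0 = [oo,3,3] : m12 = oo, m23 = m34 = 3, others 2 *)
Definition M0 := mk4 0 2 2 3 2 3.
(* W1 = [3,oo,3] : m12 = 3, m23 = oo, m34 = 3, others 2 *)
Definition M1 := mk4 3 2 2 0 2 3.
(* W2 = [oo,3^{1,1}] : m12 = oo, m23 = m24 = 3, others 2 *)
Definition M2 := mk4 0 2 2 3 3 2.

(* Main.v *)
Require Import Defs.
From mathcomp Require Import all_boot all_order all_algebra.
From mathcomp Require Import all_classical all_reals all_analysis.
From mathcomp Require Import zify ring lra.
From Stdlib Require Import ZArith Lia.
Set Implicit Arguments. Unset Strict Implicit. Unset Printing Implicit Defensive.
Import Order.TTheory GRing.Theory Num.Theory.


Definition vec := (Z * Z * Z * Z)%type.
Definition crd (f : vec) (i : nat) : Z :=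
  let '(a, b, c, d) := f in
  match i with 0 => a | 1 => b | 2 => c | _ => d end.
Definition cm (k : nat) : Z := match k with 0 => (-2)%Z | 3 => (-1)%Z | _ => 0%Z end.
Definition Ct (tbl : nat -> nat -> nat) (i t : nat) : Z :=
  if Nat.eqb i t then 2%Z else cm (tbl i t).
Definition act (tbl : nat -> nat -> nat) (i : 'I_4) (f : vec) : vec :=
  let x := crd f i in
  ((crd f 0 - Ct tbl i 0 * x)%Z, (crd f 1 - Ct tbl i 1 * x)%Z,
   (crd f 2 - Ct tbl i 2 * x)%Z, (crd f 3 - Ct tbl i 3 * x)%Z).
Definition actw tbl (w : seq 'I_4) (f : vec) : vec := foldr (act tbl) f w.

Definition tbl1 (i j : nat) : nat :=
  match i, j with
  | 0, 1 | 1, 0 => 3 | 1, 2 | 2, 1 => 0 | 2, 3 | 3, 2 => 3 | _, _ => 2 end.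
Definition tbl2 (i j : nat) : nat :=
  match i, j with
  | 0, 1 | 1, 0 => 0 | 1, 2 | 2, 1 => 3 | 1, 3 | 3, 1 => 3 | _, _ => 2 end.

Lemma M1E (s s' : 'I_4) : s != s' -> M1 s s' = tbl1 s s'.
Proof. by case: s => [[|[|[|[|?]]]] Hs]; case: s' => [[|[|[|[|?]]]] Hs']. Qed.
Lemma M2E (s s' : 'I_4) : s != s' -> M2 s s' = tbl2 s s'.
Proof. by case: s => [[|[|[|[|?]]]] Hs]; case: s' => [[|[|[|[|?]]]] Hs']. Qed.

Lemma rel_inv tbl (HT : tbl = tbl1 \/ tbl = tbl2) (s s' : 'I_4) (f : vec) :
  s != s' -> actw tbl (flatten (nseq (tbl s s') [:: s; s'])) f = f.
Proof.
case: f => [[[a b] c] d].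
case: HT => ->;
case: s => [[|[|[|[|?]]]] Hs]; case: s' => [[|[|[|[|?]]]] Hs'] // _;
rewrite /actw /act /Ct /crd /cm; cbn -[Z.mul Z.sub Z.add Z.opp];
f_equal; try f_equal; try f_equal; lia.
Qed.

Lemma sq_inv tbl (s : 'I_4) (f : vec) : actw tbl [:: s; s] f = f.
Proof.
case: f => [[[a b] c] d].
case: s => [[|[|[|[|?]]]] Hs] //;
rewrite /actw /act /Ct /crd /cm; cbn -[Z.mul Z.sub Z.add Z.opp];
f_equal; try f_equal; try f_equal; lia.
Qed.

Lemma actw_cat tbl u v f : actw tbl (u ++ v) f = actw tbl u (actw tbl v f).
Proof. by rewrite /actw foldr_cat. Qed.

Lemma relator_inv1 r f : coxeter_relator M1 r -> actw tbl1 r f = f.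
Proof.
move=> [[s ->]|[s [s' [ns [_ ->]]]]]; first exact: sq_inv.
by rewrite M1E //; apply: (rel_inv (or_introl erefl)).
Qed.
Lemma relator_inv2 r f : coxeter_relator M2 r -> actw tbl2 r f = f.
Proof.
move=> [[s ->]|[s [s' [ns [_ ->]]]]]; first exact: sq_inv.
by rewrite M2E //; apply: (rel_inv (or_intror erefl)).
Qed.

Lemma cox_inv1 u v : cox_eq M1 u v -> forall f, actw tbl1 u f = actw tbl1 v f.
Proof.
elim=> //.
- by move=> x r y Hr f; rewrite !actw_cat (relator_inv1 _ Hr).
- by move=> x y z H1 IH1 H2 IH2 f; rewrite IH1 IH2.
Qed.
Lemma cox_inv2 u v : cox_eq M2 u v -> forall f, actw tbl2 u f = actw tbl2 v f.
Proof.
elim=> //.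
- by move=> x r y Hr f; rewrite !actw_cat (relator_inv2 _ Hr).
- by move=> x y z H1 IH1 H2 IH2 f; rewrite IH1 IH2.
Qed.

Lemma cox_ctx n (m : 'I_n -> 'I_n -> nat) x y u v :
  cox_eq m x y -> cox_eq m (u ++ x ++ v) (u ++ y ++ v).
Proof.
elim=> {x y}.
- move=> x r y Hr.
  have -> : u ++ (x ++ r ++ y) ++ v = (u ++ x) ++ r ++ (y ++ v) by rewrite !catA.
  have -> : u ++ (x ++ y) ++ v = (u ++ x) ++ (y ++ v) by rewrite !catA.
  exact: cox_eq_rel.
- move=> x; exact: cox_eq_refl.
- move=> x y H IH; exact: cox_eq_sym.
- move=> x y z H1 IH1 H2 IH2; exact: cox_eq_trans IH2.
Qed.

Lemma act_invol tbl (i : 'I_4) f : act tbl i (act tbl i f) = f.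
Proof. by have := sq_inv tbl i f. Qed.

Definition f0 : vec := (1, 1, 1, 1)%Z.

Section Generic.
Variables (U : eqType) (tbl : nat -> nat -> nat) (bA bB : U -> seq 'I_4)
  (RA RB : U -> vec -> Prop).
Hypothesis C1 : forall u f, (f = f0 \/ exists u', RA u' f) -> RB u (actw tbl (bB u) f).
Hypothesis C2 : forall u f, RB u f -> RA u (actw tbl (bA u) f).
Hypothesis D1 : forall u u' f, RA u f -> RA u' f -> bA u = bA u'.
Hypothesis D2 : forall u u' f, RB u f -> RB u' f -> bB u = bB u'.
Hypothesis D3 : forall u, ~ RA u f0.
Hypothesis D4 : forall u u', bA u = bA u' -> bB u = bB u' -> u = u'.

Definition wordOf (c : seq U) : seq 'I_4 := flatten [seq bA u ++ bB u | u <- c].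

Lemma wordOf_cons u c : wordOf (u :: c) = bA u ++ bB u ++ wordOf c.
Proof. by rewrite /wordOf /= catA. Qed.

Lemma actw_rev (b : seq 'I_4) f : actw tbl (rev b) (actw tbl b f) = f.
Proof.
elim: b f => //= x b IH f.
rewrite rev_cons -cats1 actw_cat /= act_invol; exact: IH.
Qed.

Lemma fam_inv c : (c = [::] /\ actw tbl (wordOf c) f0 = f0) \/
   exists u c', c = u :: c' /\ RA u (actw tbl (wordOf c) f0) /\
     RB u (actw tbl (bB u ++ wordOf c') f0).
Proof.
elim: c => [|u c IH]; first by left.
right; exists u, c; split => //.
have HB : RB u (actw tbl (bB u ++ wordOf c) f0).
  rewrite actw_cat; apply: C1.
  case: IH => [[_ ->]|[u' [c' [_ [H _]]]]]; [by left | right; by exists u'].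
split => //.
by rewrite wordOf_cons actw_cat; apply: C2.
Qed.

Lemma fam_inj c c' : actw tbl (wordOf c) f0 = actw tbl (wordOf c') f0 -> c = c'.
Proof.
elim: c c' => [|u c IH] c'.
  case: (fam_inv c') => [[-> _]//|[u' [c'' [-> [H _]]]]] E.
  by rewrite -E in H; case: (D3 H).
case: (fam_inv (u :: c)) => [[//]|[u1 [c1 [[<- <-] [HA HB]]]]].
case: (fam_inv c') => [[-> E]|[u' [c'' [-> [HA' HB']]]]] E'.
  by rewrite E' E in HA; case: (D3 HA).
rewrite E' in HA.
have eA := D1 HA HA'.
have E2 : actw tbl (bB u ++ wordOf c) f0 = actw tbl (bB u' ++ wordOf c'') f0.
  move: E'; rewrite !wordOf_cons !(actw_cat _ (bA _)) eA => E'.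
  by rewrite -(actw_rev (bA u') (actw _ _ _)) E' actw_rev.
rewrite E2 in HB.
have eB := D2 HB HB'.
rewrite (D4 eA eB); congr (_ :: _); apply: IH.
by move: E2; rewrite !actw_cat eB => E2; rewrite -(actw_rev (bB u') (actw _ _ _)) E2 actw_rev.
Qed.
End Generic.

Definition l0 : 'I_4 := @Ordinal 4 0 isT.
Definition l1 : 'I_4 := @Ordinal 4 1 isT.
Definition l2 : 'I_4 := @Ordinal 4 2 isT.
Definition l3 : 'I_4 := @Ordinal 4 3 isT.

Ltac solve_reg :=
  rewrite /actw /act /Ct /crd /cm; cbn -[Z.mul Z.sub Z.add Z.opp]; lia.

Definition U1 := (bool * bool)%type.
Definition bA1 (u : U1) : seq 'I_4 := if u.1 then [:: l1] else [:: l0; l1].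
Definition bB1 (u : U1) : seq 'I_4 := if u.2 then [:: l2] else [:: l3; l2].
Definition univ1 (f : vec) : Prop := let '(a, b, c, d) := f in
  (1 <= b + c /\ 1 <= a + b + c /\ 1 <= b + c + d /\ 1 <= a + b + c + d)%Z.
Definition RA1 (u : U1) (f : vec) : Prop := univ1 f /\ let '(a, b, c, d) := f in
  if u.1 then (1 <= - b /\ 1 <= a /\ 1 <= c /\ 1 <= c + d)%Z
  else (1 <= - a /\ 1 <= - a - b /\ 1 <= c /\ 1 <= c + d)%Z.
Definition RB1 (u : U1) (f : vec) : Prop := univ1 f /\ let '(a, b, c, d) := f in
  if u.2 then (1 <= - c /\ 1 <= d /\ 1 <= b /\ 1 <= a + b)%Z
  else (1 <= - d /\ 1 <= - c - d /\ 1 <= b /\ 1 <= a + b)%Z.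

Lemma W1_C1 u f : (f = f0 \/ exists u', RA1 u' f) -> RB1 u (actw tbl1 (bB1 u) f).
Proof.
case: u => a b; case: f => [[[x y] z] w].
case=> [[-> -> -> ->]|[[a' b'] []]]; rewrite /RA1 /RB1 /univ1 /bB1;
  [|case: a'];case: b; solve_reg.
Qed.
Lemma W1_C2 u f : RB1 u f -> RA1 u (actw tbl1 (bA1 u) f).
Proof.
case: u => a b; case: f => [[[x y] z] w].
rewrite /RA1 /RB1 /univ1 /bA1; case: a; case: b; solve_reg.
Qed.
Lemma W1_D1 u u' f : RA1 u f -> RA1 u' f -> bA1 u = bA1 u'.
Proof.
case: u => a b; case: u' => a' b'; case: f => [[[x y] z] w].
rewrite /RA1 /bA1; case: a; case: a' => //=; lia.
Qed.
Lemma W1_D2 u u' f : RB1 u f -> RB1 u' f -> bB1 u = bB1 u'.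
Proof.
case: u => a b; case: u' => a' b'; case: f => [[[x y] z] w].
rewrite /RB1 /bB1; case: b; case: b' => //=; lia.
Qed.
Lemma W1_D3 u : ~ RA1 u f0.
Proof. case: u => a b; rewrite /RA1 /=; case: a; lia. Qed.
Lemma W1_D4 u u' : bA1 u = bA1 u' -> bB1 u = bB1 u' -> u = u'.
Proof. by case: u => [[] []]; case: u' => [[] []]. Qed.

Lemma W1_inj c c' :
  actw tbl1 (wordOf bA1 bB1 c) f0 = actw tbl1 (wordOf bA1 bB1 c') f0 -> c = c'.
Proof. exact: (fam_inj W1_C1 W1_C2 W1_D1 W1_D2 W1_D3 W1_D4). Qed.

Definition U2 := (bool * bool)%type.
Definition bA2 (u : U2) : seq 'I_4 :=
  match u with
  | (true, true) => [:: l1] | (true, false) => [:: l2; l1]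
  | (false, true) => [:: l3; l1] | (false, false) => [:: l3; l2; l1] end.
Definition bB2 (u : U2) : seq 'I_4 := [:: l0].
Definition univ2 (f : vec) : Prop := let '(a, b, c, d) := f in
  (1 <= a + b /\ 1 <= a + b + c /\ 1 <= a + b + d /\ 1 <= a + b + c + d)%Z.
Definition RA2 (u : U2) (f : vec) : Prop := univ2 f /\ let '(a, b, c, d) := f in
  (1 <= a)%Z /\
  match u with
  | (true, true) => (1 <= - b /\ 1 <= d /\ 1 <= c /\ 1 <= b + c + d)%Z
  | (true, false) => (1 <= - c /\ 1 <= - b - c /\ 1 <= d /\ 1 <= b + d)%Z
  | (false, true) => (1 <= - d /\ 1 <= - b - d /\ 1 <= c /\ 1 <= b + c)%Z
  | (false, false) => (1 <= - d /\ 1 <= - c /\ 1 <= - b - c - d /\ 1 <= b)%Z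
  end.
Definition RB2 (u : U2) (f : vec) : Prop := univ2 f /\ let '(a, b, c, d) := f in
  (1 <= - a /\ 1 <= b /\ 1 <= b + c /\ 1 <= b + d /\ 1 <= b + c + d)%Z.

Lemma W2_C1 u f : (f = f0 \/ exists u', RA2 u' f) -> RB2 u (actw tbl2 (bB2 u) f).
Proof.
case: f => [[[x y] z] w].
case=> [[-> -> -> ->]|[[a' b'] []]]; rewrite /RA2 /RB2 /univ2 /bB2;
  [|case: a'; case: b']; solve_reg.
Qed.
Lemma W2_C2 u f : RB2 u f -> RA2 u (actw tbl2 (bA2 u) f).
Proof.
case: u => a b; case: f => [[[x y] z] w].
rewrite /RA2 /RB2 /univ2 /bA2; case: a; case: b; solve_reg.
Qed.
Lemma W2_D1 u u' f : RA2 u f -> RA2 u' f -> bA2 u = bA2 u'.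
Proof.
case: u => a b; case: u' => a' b'; case: f => [[[x y] z] w].
rewrite /RA2 /bA2; case: a; case: b; case: a'; case: b' => //=; lia.
Qed.
Lemma W2_D2 u u' f : RB2 u f -> RB2 u' f -> bB2 u = bB2 u'.
Proof. by []. Qed.
Lemma W2_D3 u : ~ RA2 u f0.
Proof. case: u => a b; rewrite /RA2 /=; case: a; case: b; lia. Qed.
Lemma W2_D4 u u' : bA2 u = bA2 u' -> bB2 u = bB2 u' -> u = u'.
Proof. by case: u => [[] []]; case: u' => [[] []]. Qed.

Lemma W2_inj c c' :
  actw tbl2 (wordOf bA2 bB2 c) f0 = actw tbl2 (wordOf bA2 bB2 c') f0 -> c = c'.
Proof. exact: (fam_inj W2_C1 W2_C2 W2_D1 W2_D2 W2_D3 W2_D4). Qed.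

Import ssrnat.
Delimit Scope nat_scope with N.


Definition dg (x : 'I_4) : nat := (3 - x)%N.
Definition code (w : seq 'I_4) : nat := foldl (fun a x => a * 4 + dg x)%N 0%N w.

Lemma foldl_code a t : foldl (fun a x => a * 4 + dg x)%N a t = (a * 4 ^ size t + code t)%N.
Proof.
rewrite /code; elim: t a => [|x t IH] a /=; first by rewrite muln1 addn0.
rewrite IH [in RHS]IH expnS; lia.
Qed.

Lemma code_cat s t : code (s ++ t) = (code s * 4 ^ size t + code t)%N.
Proof. by rewrite {1}/code foldl_cat foldl_code. Qed.

Lemma code_mono u p q v : size q = size p -> (code q < code p)%N ->
  (code (u ++ q ++ v) < code (u ++ p ++ v))%N.
Proof.
move=> sz lt; rewrite !code_cat !size_cat sz ltn_add2l.
rewrite ltn_add2r ltn_pmul2r //; by rewrite expn_gt0.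
Qed.

Definition ord4 : seq 'I_4 := [:: l0; l1; l2; l3].
Lemma mem_ord4 (x : 'I_4) : x \in ord4.
Proof. by case: x => [[|[|[|[|?]]]] ?] //; rewrite inE; apply/orP; left; apply/eqP/val_inj. Qed.

Definition rels0 : seq (seq 'I_4) := [seq [:: s; s] | s <- ord4] ++
  [seq flatten (nseq (M0 st.1 st.2) [:: st.1; st.2]) |
     st <- [seq (s, t) | s <- ord4, t <- ord4] & (st.1 != st.2) && (0 < M0 st.1 st.2)%N].

Lemma rels0P r : r \in rels0 -> coxeter_relator M0 r.
Proof.
rewrite mem_cat => /orP[/mapP[s _ ->]|/mapP[[s t] + ->]]; first by left; exists s.
rewrite mem_filter /= => /andP[/andP[nst mpos] _].
by right; exists s, t.
Qed.

Definition ins_ok (x y : seq 'I_4) : bool :=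
  has (fun i => has (fun r => y == take i x ++ r ++ drop i x) rels0) (iota 0 (size x).+1).

Lemma ins_okP x y : ins_ok x y -> cox_eq M0 y x.
Proof.
move=> /hasP[i _ /hasP[r rin /eqP ->]].
rewrite -{3}(cat_take_drop i x); apply: cox_eq_rel; exact: rels0P.
Qed.

Definition step_ok x y := ins_ok x y || ins_ok y x.

Lemma path_ok x l : path step_ok x l -> cox_eq M0 x (last x l).
Proof.
elim: l x => [|y l IH] x /=; first by move=> _; apply: cox_eq_refl.
move=> /andP[st /IH H]; apply: cox_eq_trans H.
case/orP: st => [/ins_okP/cox_eq_sym //|/ins_okP //].
Qed.

Definition better (q p : seq 'I_4) : bool :=
  (size q < size p)%N || ((size q == size p) && (code q < code p)%N).

Definition forbp : seq (seq 'I_4 * seq (seq 'I_4)) := [::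
  ([:: l0; l0], [:: [::]]);
  ([:: l0; l2], [:: [:: l2; l2; l0; l2]; [:: l2; l0; l0; l2; l0; l2]; [:: l2; l0]]);
  ([:: l0; l3], [:: [:: l3; l3; l0; l3]; [:: l3; l0; l0; l3; l0; l3]; [:: l3; l0]]);
  ([:: l1; l1], [:: [::]]);
  ([:: l1; l3], [:: [:: l3; l3; l1; l3]; [:: l3; l1; l1; l3; l1; l3]; [:: l3; l1]]);
  ([:: l2; l2], [:: [::]]);
  ([:: l3; l3], [:: [::]]);
  ([:: l1; l2; l1], [:: [:: l2; l2; l1; l2; l1]; [:: l2; l1; l1; l2; l1; l2; l1]; [:: l2; l1; l2; l2; l1; l2; l1; l2; l1]; [:: l2; l1; l2]]);
  ([:: l2; l3; l2], [:: [:: l3; l3; l2; l3; l2]; [:: l3; l2; l2; l3; l2; l3; l2]; [:: l3; l2; l3; l3; l2; l3; l2; l3; l2]; [:: l3; l2; l3]]);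
  ([:: l1; l2; l3; l1], [:: [:: l2; l1; l2; l1; l2; l1; l1; l2; l3; l1]; [:: l2; l1; l2; l1; l2; l2; l3; l1]; [:: l2; l1; l2; l3; l3; l1; l2; l2; l3; l1]; [:: l2; l1; l2; l3; l3; l1; l3; l1]; [:: l2; l1; l2; l3]])].
Definition st0 : seq (seq 'I_4) := [:: [::]; [:: l0]; [:: l1]; [:: l2]; [:: l3]; [:: l0; l1]; [:: l1; l0]; [:: l1; l2]; [:: l2; l0]; [:: l2; l1]; [:: l2; l3]; [:: l3; l0]; [:: l3; l1]; [:: l3; l2]; [:: l0; l1; l0]; [:: l0; l1; l2]; [:: l1; l0; l1]; [:: l1; l2; l0]; [:: l1; l2; l3]; [:: l2; l0; l1]; [:: l2; l1; l0]; [:: l2; l1; l2]; [:: l2; l3; l0]; [:: l2; l3; l1]; [:: l3; l0; l1]; [:: l3; l1; l0]; [:: l3; l1; l2]; [:: l3; l2; l0]; [:: l3; l2; l1]; [:: l3; l2; l3]].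
Definition vtab : seq (seq 'I_4 * nat) := [:: ([::], 229); ([:: l0], 39); ([:: l1], 57); ([:: l2], 109); ([:: l3], 138); ([:: l0; l1], 57); ([:: l1; l0], 39); ([:: l1; l2], 45); ([:: l2; l0], 39); ([:: l2; l1], 57); ([:: l2; l3], 65); ([:: l3; l0], 39); ([:: l3; l1], 57); ([:: l3; l2], 109); ([:: l0; l1; l0], 39); ([:: l0; l1; l2], 45); ([:: l1; l0; l1], 57); ([:: l1; l2; l0], 39); ([:: l1; l2; l3], 27); ([:: l2; l0; l1], 57); ([:: l2; l1; l0], 39); ([:: l2; l1; l2], 45); ([:: l2; l3; l0], 39); ([:: l2; l3; l1], 57); ([:: l3; l0; l1], 57); ([:: l3; l1; l0], 39); ([:: l3; l1; l2], 45); ([:: l3; l2; l0], 39); ([:: l3; l2; l1], 57); ([:: l3; l2; l3], 65)].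

Definition forb0 : seq (seq 'I_4) := map fst forbp.

Lemma forbp_ok : all (fun pl => path step_ok pl.1 pl.2 && better (last pl.1 pl.2) pl.1) forbp.
Proof. by vm_compute. Qed.

Lemma forb0P p : p \in forb0 -> exists q, cox_eq M0 p q /\
  ((size q < size p)%N \/ (size q = size p /\ (code q < code p)%N)).
Proof.
move=> /mapP[[p' l] pin ->] /=.
have /allP/(_ _ pin)/andP[P B] := forbp_ok.
exists (last p' l); split; first exact: path_ok.
case/orP: B => [->|/andP[/eqP -> ->]]; [by left | by right].
Qed.

Lemma avoid w : (forall v, cox_eq M0 v w -> (size w <= size v)%N) ->
  (forall v, size v = size w -> cox_eq M0 v w -> (code w <= code v)%N) ->
  forall u p v, w = u ++ p ++ v -> p \notin forb0.
Proof.
move=> geo mn u p v E; apply/negP => /forb0P[q [pq H]].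
have eqw : cox_eq M0 (u ++ q ++ v) w.
  rewrite E; apply: cox_ctx; exact: cox_eq_sym.
case: H => [lt|[sz lt]].
  by have := geo _ eqw; rewrite E !size_cat leq_add2l leq_add2r leqNgt lt.
have szeq : size (u ++ q ++ v) = size w by rewrite E !size_cat sz.
by have := mn _ szeq eqw; rewrite E leqNgt code_mono.
Qed.

Definition lastk (l : seq 'I_4) := drop (size l - 3) l.
Definition allowed (s : seq 'I_4) (x : 'I_4) := all (fun p => ~~ suffix p (rcons s x)) forb0.
Definition nxt s x := lastk (rcons s x).
Fixpoint words (n : nat) (s : seq 'I_4) : seq (seq 'I_4) :=
  match n with
  | 0 => [:: [::]]
  | n'.+1 => flatten [seq [seq x :: e | e <- words n' (nxt s x)] | x <- ord4 & allowed s x]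
  end.
Fixpoint valid_from s e := match e with [::] => true | x :: e' => allowed s x && valid_from (nxt s x) e' end.

Lemma words_S n s : words n.+1 s =
  flatten [seq [seq x :: e | e <- words n (nxt s x)] | x <- [seq x <- ord4 | allowed s x]].
Proof. by []. Qed.

Lemma valid_words e s : valid_from s e -> e \in words (size e) s.
Proof.
elim: e s => [|x e IH] s; first by rewrite inE.
move=> /= /andP[al V]; change (x :: e \in words (size e).+1 s); rewrite words_S; apply/flattenP.
exists [seq x :: e0 | e0 <- words (size e) (nxt s x)].
  apply/mapP; exists x => //; by rewrite mem_filter al mem_ord4.
by rewrite mem_map ?IH //; move=> a b [].
Qed.

Lemma lastk_nxt pre x : nxt (lastk pre) x = lastk (rcons pre x).
Proof.
rewrite /nxt /lastk -drop_rcons; last by rewrite leq_subr.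
rewrite drop_drop size_drop !size_rcons; congr drop; lia.
Qed.

Lemma suffix_lastk pre x : suffix (rcons (lastk pre) x) (rcons pre x).
Proof.
apply/suffixP; exists (take (size pre - 3) pre).
by rewrite /lastk -rcons_cat cat_take_drop.
Qed.

Lemma avoid_valid e pre : (forall u p v, pre ++ e = u ++ p ++ v -> p \notin forb0) ->
  valid_from (lastk pre) e.
Proof.
elim: e pre => [//|x e IH] pre H /=; apply/andP; split.
  apply/allP => p pin; apply/negP => suf.
  have : suffix p (rcons pre x) by apply: suffix_trans suf (suffix_lastk pre x).
  move=> /suffixP[u Eu]; have := H u p e.
  rewrite pin => /(_ _)/negP; apply => //.
  by rewrite -cat_rcons Eu catA.
rewrite lastk_nxt; apply: IH => u p v Eq; apply: H.
by rewrite -cat_rcons Eq.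
Qed.

Definition vf (s : seq 'I_4) : nat := head 0%N [seq pv.2 | pv <- vtab & pv.1 == s].

Lemma aut_ok : all (fun s => (0 < vf s)%N &&
   (2 * sumn [seq vf (nxt s x) | x <- ord4 & allowed s x] <= 3 * vf s)%N &&
   all (fun x => allowed s x ==> (nxt s x \in st0)) (ord4)) st0.
Proof. by vm_compute. Qed.

Lemma sumn_bound (L : seq 'I_4) (f g : 'I_4 -> nat) n :
  (forall x, x \in L -> f x * 2 ^ n <= g x * 3 ^ n)%N ->
  (sumn (map f L) * 2 ^ n <= sumn (map g L) * 3 ^ n)%N.
Proof.
elim: L => [//|x L IH] H /=; rewrite !mulnDl leq_add //.
  by apply: H; rewrite inE eqxx.
by apply: IH => y yL; apply: H; rewrite inE yL orbT.
Qed.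

Lemma words_bound n s : s \in st0 -> (size (words n s) * 2 ^ n <= vf s * 3 ^ n)%N.
Proof.
elim: n s => [|n IH] s sin.
  have /allP/(_ _ sin)/andP[/andP[v0 _] _] := aut_ok.
  by rewrite /= !muln1.
have /allP/(_ _ sin)/andP[/andP[_ sm] cl] := aut_ok.
rewrite words_S size_flatten /shape -map_comp.
have -> : [seq (size \o (fun x => [seq x :: e | e <- words n (nxt s x)])) i
          | i <- [seq x <- ord4 | allowed s x]] =
          [seq size (words n (nxt s x)) | x <- [seq x <- ord4 | allowed s x]].
  by apply: eq_map => x /=; rewrite size_map.
rewrite expnS mulnCA.
apply: (@leq_trans (2 * (sumn [seq vf (nxt s x) | x <- [seq x <- ord4 | allowed s x]] * 3 ^ n))).
  apply: leq_mul => //; apply: sumn_bound => x.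
  rewrite mem_filter => /andP[al _]; apply: IH.
  by have /allP/(_ x (mem_ord4 x)) := cl; rewrite al.
by rewrite expnS !mulnA [vf s * 3]mulnC leq_mul2r sm orbT.
Qed.

Lemma W0_count_list w : (forall v, cox_eq M0 v w -> (size w <= size v)%N) ->
  (forall v, size v = size w -> cox_eq M0 v w -> (code w <= code v)%N) ->
  w \in words (size w) [::].
Proof.
move=> geo mn; apply: valid_words.
by apply: (avoid_valid (pre := [::])) => u p v E; apply: (avoid geo mn E).
Qed.

Section Asym.
Variable R : realType.
Local Open Scope ring_scope.

Definition ua (a : nat -> nat) : (\bar R)^nat :=
  fun k => (((a k)%:R : R) `^ (k%:R^-1))%:E.

Lemma limn_esup_le_esups (u : (\bar R)^nat) N : (limn_esup u <= esups u N)%E.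
Proof.
rewrite limn_esup_lim.
have -> : limn (esups u) = ereal_inf (range (esups u)).
  by apply/cvg_lim => //; exact: cvg_esups_inf.
by apply: ereal_inf_lbound; exists N.
Qed.

Lemma limn_esup_ge (u : (\bar R)^nat) x : (forall N, x <= esups u N)%E -> (x <= limn_esup u)%E.
Proof.
move=> H; rewrite limn_esup_lim.
have -> : limn (esups u) = ereal_inf (range (esups u)).
  by apply/cvg_lim => //; exact: cvg_esups_inf.
by apply: le_ereal_inf_tmp => _ [N _ <-].
Qed.

Lemma root_le (A x : R) k : (0 < k)%N -> 0 <= A -> 0 <= x -> A <= x ^+ k ->
  A `^ (k%:R^-1) <= x.
Proof.
move=> k0 A0 x0 Ax.
have kR : (k%:R : R) != 0 by rewrite pnatr_eq0 -lt0n.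
have -> : x = (x ^+ k) `^ (k%:R^-1).
  by rewrite -powR_mulrn // -powRrM mulfV // powRr1.
by apply: ge0_ler_powR; rewrite ?nnegrE ?invr_ge0 ?ler0n ?exprn_ge0.
Qed.

Lemma root_ge (A x : R) k : (0 < k)%N -> 0 <= A -> 0 <= x -> x ^+ k <= A ->
  x <= A `^ (k%:R^-1).
Proof.
move=> k0 A0 x0 Ax.
have kR : (k%:R : R) != 0 by rewrite pnatr_eq0 -lt0n.
have -> : x = (x ^+ k) `^ (k%:R^-1).
  by rewrite -powR_mulrn // -powRrM mulfV // powRr1.
by apply: ge0_ler_powR; rewrite ?nnegrE ?invr_ge0 ?ler0n ?exprn_ge0.
Qed.

Lemma gr_upper (a : nat -> nat) (x : R) K : 0 <= x ->
  (forall k, (K < k)%N -> (a k)%:R <= x ^+ k) -> (limn_esup (ua a) <= x%:E)%E.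
Proof.
move=> x0 H; apply: le_trans (limn_esup_le_esups _ K.+1) _.
apply: ge_ereal_sup => _ [k /= Kk <-]; rewrite lee_fin.
apply: root_le => //; first exact: leq_ltn_trans Kk.
exact: H.
Qed.

Lemma bernoulli (h : R) m : 0 <= h -> 1 + m%:R * h <= (1 + h) ^+ m.
Proof.
move=> h0; elim: m => [|m IH]; first by rewrite mul0r addr0 expr0.
rewrite exprS -natr1.
have hm : 0 <= (1 + h) ^+ m by rewrite exprn_ge0 // addr_ge0.
have : (1 + h) * (1 + m%:R * h) <= (1 + h) * (1 + h) ^+ m.
  by apply: ler_wpM2l => //; rewrite addr_ge0.
apply: le_trans.
have : 0 <= m%:R * h * h by rewrite !mulr_ge0.
have mr : (0 : R) <= m%:R by [].
nra.
Qed.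

Lemma exp_beats (c lam mu D : R) : 0 < c -> 1 <= mu -> mu < lam -> 0 <= D ->
  exists n : nat, D + n.+1%:R * mu ^+ n < c * lam ^+ n.
Proof.
move=> c0 mu1 mulam D0.
have mu0 : 0 < mu by lra.
set r := lam / mu.
set h := r - 1.
have r1 : 1 < r by rewrite /r ltr_pdivlMr // mul1r.
have h0 : 0 < h by rewrite /h subr_gt0.
set m := (Num.truncn ((D + 3) / (c * h ^+ 2))).+1.
have hm : (D + 3) / (c * h ^+ 2) < m%:R by exact: truncnS_gt.
have ch0 : 0 < c * h ^+ 2 by rewrite mulr_gt0 // exprn_gt0.
have hm2 : D + 3 < m%:R * (c * h ^+ 2).
  by rewrite -ltr_pdivrMr.
have m1 : (1 : R) <= m%:R by rewrite ler1n.
exists (m + m)%N.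
have lamE : lam = r * mu by rewrite /r divfK // gt_eqF.
have B := bernoulli m (ltW h0).
have eR : r = 1 + h by rewrite /h addrC subrK.
have rm : (1 + m%:R * h) ^+ 2 <= r ^+ (m + m).
  have p0 : 0 <= 1 + m%:R * h.
    by apply: addr_ge0 => //; apply: mulr_ge0 => //; apply: ltW.
  by rewrite exprD eR expr2; apply: ler_pM.
have mun : 1 <= mu ^+ (m + m) by rewrite exprn_ege1.
rewrite lamE exprMn.
have key : D + (m + m).+1%:R < c * r ^+ (m + m).
  apply: lt_le_trans (_ : c * (1 + m%:R * h) ^+ 2 <= _); last by rewrite ler_pM2l.
  rewrite -addn1 !natrD.
  have : 0 <= m%:R * h by apply: mulr_ge0 => //; apply: ltW.
  move: hm2; rewrite /GRing.exp /=. nra.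
set M := mu ^+ (m + m) in mun *.
set Q := r ^+ (m + m) in key *.
have : 0 <= (m + m).+1%:R :> R by [].
nra.
Qed.

Lemma gr_lower (a : nat -> nat) (c lam mu : R) : 0 < c -> 1 <= mu -> mu < lam ->
  (forall n, c * lam ^+ n <= (\sum_(j < n.+1) a j)%:R) ->
  (mu%:E <= limn_esup (ua a))%E.
Proof.
move=> c0 mu1 mulam H; apply: limn_esup_ge => N.
case: (pselect (exists k, (N < k)%N /\ mu ^+ k <= (a k)%:R)) => [[k [Nk Hk]]|nE].
  apply: le_ereal_sup_tmp; exists (ua a k); first by exists k => //; apply: ltnW.
  rewrite lee_fin; apply: root_ge => //; first exact: leq_ltn_trans Nk.
  lra.
exfalso.
have Hlt : forall k, (N < k)%N -> (a k)%:R <= mu ^+ k.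
  move=> k Nk; rewrite leNgt; apply/negP => /ltW ak; apply: nE; by exists k.
set D := (\sum_(j < N.+1) a j)%:R : R.
have D0 : 0 <= D by [].
have S : forall n, (\sum_(j < n.+1) a j)%:R <= D + n.+1%:R * mu ^+ n.
  elim=> [|n IH].
    rewrite /D big_ord1 big_ord_recl /= natrD.
    have : 0 <= mu ^+ 0 by [].
    have : (0 : R) <= (\sum_(i < N) a (lift ord0 i))%:R by [].
    rewrite expr0; lra.
  case: (leqP n.+1 N) => nN.
    have : (\sum_(j < n.+2) a j <= \sum_(j < N.+1) a j)%N.
      rewrite -!(big_mkord xpredT) (big_cat_nat (n := n.+2) (p := N.+1)) //=; exact: leq_addr.
    rewrite -(ler_nat R) -/D => HD.
    apply: le_trans HD _; rewrite lerDl; apply: mulr_ge0 => //.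
    by apply: exprn_ge0; lra.
  rewrite big_ord_recr /= natrD.
  have := Hlt _ nN.
  have mm : mu ^+ n <= mu ^+ n.+1.
    by rewrite exprS ler_peMl //; apply: exprn_ge0; lra.
  have : 0 <= mu ^+ n by apply: exprn_ge0; lra.
  rewrite -[n.+2%:R]natr1.
  have : 0 <= n.+1%:R * (mu ^+ n.+1 - mu ^+ n) :> R.
    by apply: mulr_ge0 => //; rewrite subr_ge0.
  move: IH; lra.
have [n Hn] := exp_beats c0 mu1 mulam D0.
have := H n; have := S n; lra.
Qed.
End Asym.

Lemma gc0_le k : (growth_coeff M0 k <= size (words k [::]))%N.
Proof.
rewrite /growth_coeff.
set S := [set w : k.-tuple 'I_4 | _].
pose phi (w : k.-tuple 'I_4) := fintype.arg_min w
   (fun t : k.-tuple 'I_4 => `[< cox_eq M0 t w >]) (fun t => code t).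
have phiP w : cox_eq M0 (phi w) w /\
    forall t : k.-tuple 'I_4, cox_eq M0 t w -> (code (phi w) <= code t)%N.
  rewrite /phi; case: arg_minnP => [|t Ht Hmin]; first by apply/asboolP; apply: cox_eq_refl.
  split; first exact/asboolP.
  by move=> t' H; apply: Hmin; apply/asboolP.
have inj : {in S &, injective phi}.
  move=> w1 w2; rewrite !inE => /andP[_ /forallP H1] /andP[_ /forallP H2] E.
  have e12 : cox_eq M0 w1 w2.
    apply: cox_eq_trans (cox_eq_sym (phiP w1).1) _; rewrite E; exact: (phiP w2).1.
  case: (ltngtP (enum_rank w1) (enum_rank w2)) => [lt|lt|eq].
  - by have := H2 w1; rewrite lt /= => /negP; case; apply/asboolP.
  - by have := H1 w2; rewrite lt /= => /negP; case; apply/asboolP; apply: cox_eq_sym.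
  - by apply: enum_rank_inj; apply: val_inj.
rewrite -(card_in_imset inj).
apply: (@leq_trans #|[set t : k.-tuple 'I_4 | tval t \in words k [::]]|).
  apply: subset_leq_card; apply/fintype.subsetP => _ /imsetP[w wS ->]; rewrite inE.
  have [ceq cmin] := phiP w.
  move: wS; rewrite inE => /andP[/asboolP geo _].
  suff H : tval (phi w) \in words (size (tval (phi w))) [::] by rewrite size_tuple in H.
  apply: W0_count_list.
    move=> v Hv; rewrite size_tuple -(size_tuple w); apply: geo.
    exact: cox_eq_trans Hv ceq.
  move=> v szv Hv.
  have szv' : size v == k by rewrite szv size_tuple.
  apply: (cmin (Tuple szv')); exact: cox_eq_trans Hv ceq.
apply: (@leq_trans (size (pmap insub (words k [::]) : seq (k.-tuple 'I_4)))).
  apply: (@leq_trans #|pmap insub (words k [::]) : seq (k.-tuple 'I_4)|); last exact: card_size.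
  apply: subset_leq_card; apply/fintype.subsetP => t; rewrite inE => H.
  by rewrite mem_pmap_sub.
by rewrite size_pmap count_size.
Qed.

Section Lower.
Variable m : 'I_4 -> 'I_4 -> nat.

Definition Pl (w : seq 'I_4) (j : nat) : bool :=
  `[< exists t : seq 'I_4, size t = j /\ cox_eq m t w >].
Lemma exPl w : exists j, Pl w j.
Proof. by exists (size w); apply/asboolP; exists w; split => //; apply: cox_eq_refl. Qed.
Definition len w := ex_minn (exPl w).

Lemma lenP w : (exists t : seq 'I_4, size t = len w /\ cox_eq m t w) /\
  forall v, cox_eq m v w -> (len w <= size v)%N.
Proof.
rewrite /len; case: ex_minnP => j /asboolP Hj Hmin; split => // v Hv.
by apply: Hmin; apply/asboolP; exists v.
Qed.

Lemma len_le w : (len w <= size w)%N.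
Proof. by apply: (lenP w).2; apply: cox_eq_refl. Qed.

Lemma part_count n (L : seq (seq 'I_4)) : (forall w, w \in L -> (len w <= n)%N) ->
  size L = \sum_(j < n.+1) count (fun w => len w == j) L.
Proof.
elim: L => [_|x L IH H] /=; first by rewrite big1.
rewrite big_split /= -IH; last by move=> w wL; apply: H; rewrite inE wL orbT.
have lx : (len x < n.+1)%N by rewrite ltnS; apply: H; rewrite inE eqxx.
rewrite (bigD1 (Ordinal lx)) //= eqxx big1 ?add1n ?addn0 //.
move=> i /negP ni; case: eqP => // E; case: ni; apply/eqP/val_inj => /=; by rewrite E.
Qed.

Lemma class_count j (L : seq (seq 'I_4)) : uniq L ->
  (forall w w', w \in L -> w' \in L -> cox_eq m w w' -> w = w') ->
  (count (fun w => len w == j) L <= growth_coeff m j)%N.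
Proof.
move=> uL pw; rewrite -size_filter.
set Lj := seq.filter _ L.
have dflt : size (nseq j (@Ordinal 4 0 isT)) == j by rewrite size_nseq.
pose t0 (w : seq 'I_4) : j.-tuple 'I_4 :=
  odflt (Tuple dflt) [pick t : j.-tuple 'I_4 | `[< cox_eq m t w >]].
pose g (w : seq 'I_4) := fintype.arg_min (t0 w)
  (fun t : j.-tuple 'I_4 => `[< cox_eq m t w >]) (fun t => nat_of_ord (enum_rank t)).
have gP w : w \in Lj -> cox_eq m (g w) w /\
   forall t : j.-tuple 'I_4, cox_eq m t w -> (enum_rank (g w) <= enum_rank t)%N.
  rewrite mem_filter => /andP[/eqP lw _].
  have [[t [st ct]] _] := lenP w.
  have st' : size t == j by rewrite st lw.
  have Pt0 : `[< cox_eq m (t0 w) w >].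
    rewrite /t0; case: pickP => [t' //|/(_ (Tuple st'))]; by rewrite /= (asboolT ct).
  rewrite /g; case: arg_minnP => // t1 H1 Hm; split; first exact/asboolP.
  by move=> t' H; apply: Hm; apply/asboolP.
have ginj : {in Lj &, injective g}.
  have inL w : w \in Lj -> w \in L by rewrite mem_filter => /andP[].
  move=> w1 w2 i1 i2 E; apply: pw; [exact: inL | exact: inL |].
  apply: cox_eq_trans (cox_eq_sym (gP _ i1).1) _; rewrite E; exact: (gP _ i2).1.
have -> : size Lj = size (map g Lj) by rewrite size_map.
have uq : uniq (map g Lj) by rewrite map_inj_in_uniq // filter_uniq.
rewrite -(card_uniqP uq) /growth_coeff; apply: subset_leq_card.
apply/fintype.subsetP => _ /mapP[w wL ->]; rewrite inE; apply/andP; split.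
  apply/asboolP => v Hv; rewrite size_tuple.
  have wL' := wL; move: wL'; rewrite mem_filter => /andP[/eqP <- _].
  apply: (lenP w).2; exact: cox_eq_trans Hv (gP _ wL).1.
apply/forallP => v; apply/implyP => lt; apply/negP => /asboolP Hv.
have := (gP _ wL).2 v (cox_eq_trans Hv (gP _ wL).1).
by rewrite leqNgt lt.
Qed.

Lemma gc_lower_list n (L : seq (seq 'I_4)) : uniq L ->
  (forall w, w \in L -> (size w <= n)%N) ->
  (forall w w', w \in L -> w' \in L -> cox_eq m w w' -> w = w') ->
  (size L <= \sum_(j < n.+1) growth_coeff m j)%N.
Proof.
move=> uL sL pw.
rewrite (@part_count n); last by move=> w wL; apply: leq_trans (len_le w) (sL _ wL).
by apply: leq_sum => j _; apply: class_count.
Qed.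
End Lower.

Definition Ub := (bool * bool)%type.
Definition usb : seq Ub := [:: (true, true); (true, false); (false, true); (false, false)].
Definition ulen (u : Ub) : nat :=
  match u with (true, true) => 2 | (false, false) => 4 | _ => 3 end.

Fixpoint famL (fuel n : nat) : seq (seq Ub) :=
  match fuel with
  | 0 => [:: [::]]
  | f.+1 => [::] :: flatten [seq [seq u :: c | c <- famL f (n - ulen u)] |
                              u <- seq.filter (fun u => ulen u <= n)%N usb]
  end.

Lemma famL_S f n : famL f.+1 n = [::] :: flatten [seq [seq u :: c | c <- famL f (n - ulen u)] |
                              u <- seq.filter (fun u => ulen u <= n)%N usb].
Proof. by []. Qed.

Lemma famL_word (bA bB : Ub -> seq 'I_4) :
  (forall u, size (bA u ++ bB u) = ulen u) ->
  forall f n c, c \in famL f n -> (size (wordOf bA bB c) <= n)%N.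
Proof.
move=> hl; elim=> [|f IH] n c; first by rewrite /= inE => /eqP ->.
rewrite famL_S inE => /orP[/eqP -> //|/flattenP[l /mapP[u] + -> /mapP[c' c'in ->]]].
rewrite mem_filter => /andP[un _].
rewrite wordOf_cons catA size_cat hl.
have := IH _ _ c'in; rewrite -(leq_add2l (ulen u)) subnKC //.
Qed.

Lemma flat_uniq (l : seq Ub) (F : Ub -> seq (seq Ub)) : uniq l -> (forall u, uniq (F u)) ->
  uniq (flatten [seq [seq u :: c | c <- F u] | u <- l]).
Proof.
elim: l => [//|u l IH] /= /andP[ul ul'] H.
rewrite cat_uniq IH // andbT map_inj_uniq ?H //; last by move=> a b [].
apply/hasPn => x /flattenP[s /mapP[u' u'l ->] /mapP[c _ ->]].
apply/negP => /mapP[c'' _ [e _]]; rewrite -e u'l in ul; by [].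
Qed.

Lemma famL_uniq f n : uniq (famL f n).
Proof.
elim: f n => [//|f IH] n.
rewrite famL_S cons_uniq; apply/andP; split; last first.
  by apply: flat_uniq => //; apply: filter_uniq.
by apply/negP => /flattenP[s /mapP[u _ ->] /mapP[c _]].
Qed.

Lemma size_famL_S4 f n : size (famL f.+1 n.+4) =
  (size (famL f n.+2) + (size (famL f n.+1) + (size (famL f n.+1) + size (famL f n)))).+1.
Proof. by rewrite /= !size_cat !size_map !subSS !subn0 /= addn0. Qed.

Section Size.
Variable R : realType.
Local Open Scope ring_scope.

Lemma small k : (k <= 3)%N -> (1/8 : R) * (8/5) ^+ k <= 1.
Proof. by case: k => [|[|[|[|k]]]] // _; rewrite ?exprS ?expr0; lra. Qed.

Lemma famL_ge1 f n : (1 <= size (famL f n))%N.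
Proof. by case: f. Qed.

Lemma famL_lb f n : (n <= f)%N -> (1/8 : R) * (8/5) ^+ n <= (size (famL f n))%:R.
Proof.
elim: f n => [|f IH] n.
  rewrite leqn0 => /eqP -> /=; rewrite expr0; lra.
case: n => [|[|[|[|n]]]] nf; last first.
2-5: by apply: (@le_trans _ _ 1); [apply: small | rewrite ler1n famL_ge1].
have nf' : (n.+3 <= f)%N by rewrite -ltnS.
have h2 := IH n.+2 (ltnW nf').
have h3 := IH n.+1 (ltnW (ltnW nf')).
have h4 := IH n (ltnW (ltnW (ltnW nf'))).
rewrite size_famL_S4 -[(size (famL f n.+2) + _).+1%:R]natr1 !natrD.
have x0 : 0 <= (8/5 : R) ^+ n by apply: exprn_ge0; lra.
rewrite !exprS in h2 h3 *.
set x := (8/5 : R) ^+ n in h2 h3 h4 x0 *.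
lra.
Qed.
End Size.

Lemma hl1 u : size (bA1 u ++ bB1 u) = ulen u.
Proof. by case: u => [[] []]. Qed.
Lemma hl2 u : size (bA2 u ++ bB2 u) = ulen u.
Proof. by case: u => [[] []]. Qed.

Section Final.
Variable R : realType.
Local Open Scope ring_scope.

Lemma W1_lower n : (1/8 : R) * (8/5) ^+ n <= (\sum_(j < n.+1) growth_coeff M1 j)%:R.
Proof.
apply: le_trans (famL_lb R (leqnn n)) _; rewrite ler_nat.
rewrite -(size_map (wordOf bA1 bB1)).
apply: gc_lower_list.
- rewrite map_inj_in_uniq ?famL_uniq // => c c' _ _ E; apply: W1_inj; by rewrite E.
- move=> w /mapP[c cin ->]; exact: (famL_word hl1 cin).
- move=> w w' /mapP[c _ ->] /mapP[c' _ ->] H.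
  by rewrite (W1_inj (cox_inv1 H f0)).
Qed.

Lemma W2_lower n : (1/8 : R) * (8/5) ^+ n <= (\sum_(j < n.+1) growth_coeff M2 j)%:R.
Proof.
apply: le_trans (famL_lb R (leqnn n)) _; rewrite ler_nat.
rewrite -(size_map (wordOf bA2 bB2)).
apply: gc_lower_list.
- rewrite map_inj_in_uniq ?famL_uniq // => c c' _ _ E; apply: W2_inj; by rewrite E.
- move=> w /mapP[c cin ->]; exact: (famL_word hl2 cin).
- move=> w w' /mapP[c _ ->] /mapP[c' _ ->] H.
  by rewrite (W2_inj (cox_inv2 H f0)).
Qed.

Lemma W1_gr : ((39/25 : R)%:E <= growth_rate R M1)%E.
Proof.
apply: (gr_lower (c := 1/8) (lam := 8/5)); try lra.
exact: W1_lower.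
Qed.

Lemma W2_gr : ((39/25 : R)%:E <= growth_rate R M2)%E.
Proof.
apply: (gr_lower (c := 1/8) (lam := 8/5)); try lra.
exact: W2_lower.
Qed.

Lemma W0_upper : (growth_rate R M0 <= (31/20 : R)%:E)%E.
Proof.
apply: (gr_upper (K := 6840)); first lra.
move=> k Kk.
have h1 : (growth_coeff M0 k * 2 ^ k <= 229 * 3 ^ k)%N.
  apply: leq_trans (leq_mul (gc0_le k) (leqnn _)) _.
  exact: (words_bound k (s := [::])).
have h1R : (growth_coeff M0 k)%:R * 2 ^+ k <= 229 * 3 ^+ k :> R.
  by move: h1; rewrite -(ler_nat R) !natrM !natrX.
have hb := bernoulli k (_ : 0 <= 1/30 :> R).
have kK : (6841 : R) <= k%:R by rewrite ler_nat.
have e1 : (31/30 : R) = 1 + 1/30 by field.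
have hb2 : 229 <= (31/30 : R) ^+ k.
  rewrite e1; apply: le_trans (hb _); first by move: kK; lra.
  lra.
have e2 : (31/20 : R) = (3/2) * (31/30) by field.
rewrite e2 exprMn expr_div_n.
have W0 : 0 < (2 : R) ^+ k by apply: exprn_gt0.
apply: (@le_trans _ _ (229 * 3 ^+ k / 2 ^+ k)).
  by rewrite ler_pdivlMr.
rewrite -mulrA.
have P0 : 0 <= (3 : R) ^+ k / 2 ^+ k by apply: divr_ge0; apply: exprn_ge0.
set P := (3 : R) ^+ k / 2 ^+ k in P0 *.
rewrite [P * _]mulrC; apply: ler_wpM2r => //.
Qed.
End Final.

Local Open Scope ereal_scope.

Theorem lemma3p1 (R : realType) :
  growth_rate R M0 < growth_rate R M1 /\ growth_rate R M0 < growth_rate R M2.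
Proof.
split; apply: le_lt_trans (W0_upper R) _.
  by apply: lt_le_trans (W1_gr R); rewrite lte_fin; lra.
by apply: lt_le_trans (W2_gr R); rewrite lte_fin; lra.
Qed.
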